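(* Let $\Gamma$ be a connected amply regular graph with diameter $d\ge 4$ and parameters $(v,k,\lambda,\mu)$, where $\mu=\frac{k-1}{2}$ and $k\ge5$ is odd. Then $\lambda=0$ and $d\le 5$.
   Context: An amply regular graph with parameters $(v,k,\lambda,\mu)$ is a $k$-regular graph on $v$ vertices in which any two adjacent vertices have exactly $\lambda$ common neighbours and any two vertices at distance $2$ have exactly $\mu$ common neighbours. *)

(* Defs.v *)
From mathcomp Require Import all_boot.
Set Implicit Arguments. Unset Strict Implicit. Unset Printing Implicit Defensive.

Definition simple_graph (T : finType) (e : rel T) : Prop :=
  symmetric e /\ irreflexive e.

Definition nbhd (T : finType) (e : rel T) (x : T) : {set T} := [set y | e x y].

Fixpoint ball (T : finType) (e : rel T) (x : T) (n : nat) : {set T} :=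
  match n with
  | 0 => [set x]
  | n'.+1 => ball e x n' :|: \bigcup_(z in ball e x n') nbhd e z
  end.

Definition connected_graph (T : finType) (e : rel T) : Prop :=
  forall x y : T, connect e x y.

(* graph distance: least n with y in ball x n (equals #|T| if unreachable) *)
Definition gdist (T : finType) (e : rel T) (x y : T) : nat :=
  find (fun n => y \in ball e x n) (iota 0 #|T|).

Definition diameter (T : finType) (e : rel T) : nat :=
  \max_(p : T * T) gdist e p.1 p.2.

Definition amply_regular (T : finType) (e : rel T) (v k lam mu : nat) : Prop :=
  [/\ #|T| = v,
      forall x, #|nbhd e x| = k,
      forall x y, e x y -> #|nbhd e x :&: nbhd e y| = lam &
      forall x y, gdist e x y = 2 -> #|nbhd e x :&: nbhd e y| = mu].

(* Main.v *)
Require Import Defs.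
From mathcomp Require Import all_boot.
From mathcomp Require Import zify.
Set Implicit Arguments. Unset Strict Implicit.

Lemma ballS (T : finType) (e : rel T) x n y :
  (y \in ball e x n.+1) = (y \in ball e x n) || [exists z, (z \in ball e x n) && e z y].
Proof.
rewrite /= in_setU; congr orb; apply/bigcupP/existsP => [[z zi]|[z /andP[zi ezy]]].
  by rewrite inE => h; exists z; rewrite zi h.
by exists z => //; rewrite inE.
Qed.

Lemma ball0 (T : finType) (e : rel T) x y : (y \in ball e x 0) = (y == x).
Proof. by rewrite /= inE. Qed.

Lemma ball_mono (T : finType) (e : rel T) x m n : m <= n -> {subset ball e x m <= ball e x n}.
Proof.
move=> mn; rewrite -(subnK mn); elim: (n - m) => // j IH y /IH.
by rewrite addSn ballS => ->.
Qed.

Lemma ball_trans (T : finType) (e : rel T) x y z m n :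
  y \in ball e x m -> z \in ball e y n -> z \in ball e x (m + n).
Proof.
move=> hy; elim: n z => [|n IH] z; first by rewrite ball0 addn0 => /eqP ->.
rewrite ballS addnS ballS => /orP[/IH -> //|/existsP[w /andP[/IH hw ewz]]].
by apply/orP; right; apply/existsP; exists w; rewrite hw.
Qed.

Lemma ball1 (T : finType) (e : rel T) x y : (y \in ball e x 1) = (y == x) || e x y.
Proof.
rewrite ballS ball0; congr orb.
apply/existsP/idP => [[w /andP[]]|h]; first by rewrite ball0 => /eqP ->.
by exists x; rewrite ball0 eqxx.
Qed.

Lemma ball_sym (T : finType) (e : rel T) (esym : symmetric e) x y n :
  y \in ball e x n -> x \in ball e y n.
Proof.
elim: n x y => [|n IH] x y; first by rewrite !ball0 eq_sym.
rewrite ballS => /orP[h|/existsP[w /andP[/IH hw ewy]]].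
  exact: (@ball_mono T e y n n.+1 (leqnSn n) x (IH _ _ h)).
have h1 : w \in ball e y 1 by rewrite ball1 esym ewy orbT.
by have := ball_trans h1 hw; rewrite add1n.
Qed.

Lemma path_ball (T : finType) (e : rel T) x p : path e x p -> last x p \in ball e x (size p).
Proof.
elim: p x => [|a p IH] x /=; first by rewrite ball0.
move=> /andP[exa /IH h]; have h1 : a \in ball e x 1 by rewrite ball1 exa orbT.
by have := ball_trans h1 h; rewrite add1n.
Qed.

Lemma reach (T : finType) (e : rel T) (econ : connected_graph e) x y :
  exists2 n, n < #|T| & y \in ball e x n.
Proof.
have /connectP [p pp ->] := econ x y.
case/shortenP: pp => p' pp' up' _; exists (size p'); last exact: path_ball.
change (size (x :: p') <= #|T|); move/card_uniqP: up' => <-; exact: max_card.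
Qed.

Lemma gdist_ball (T : finType) (e : rel T) (econ : connected_graph e) x y m :
  (y \in ball e x m) = (gdist e x y <= m).
Proof.
have [n nT yn] := reach econ x y.
have hH : has (fun n => y \in ball e x n) (iota 0 #|T|).
  by apply/hasP; exists n; rewrite ?mem_iota.
have iT : gdist e x y < #|T|.
  by rewrite /gdist -[X in _ < X](size_iota 0) -has_find.
have yi : y \in ball e x (gdist e x y).
  by have := nth_find 0 hH; rewrite nth_iota // add0n.
have before m' : m' < gdist e x y -> y \notin ball e x m'.
  move=> h; have := before_find 0 h; rewrite nth_iota.
    by rewrite add0n /= => ->.
  exact: ltn_trans h iT.
apply/idP/idP => [ym|im]; last exact: ball_mono im _ yi.
by rewrite leqNgt; apply/negP => h; move: (before m h); rewrite ym.
Qed.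

Lemma dist0 (T : finType) (e : rel T) (econ : connected_graph e) x y :
  (gdist e x y == 0) = (y == x).
Proof. by rewrite -leqn0 -(gdist_ball econ) ball0. Qed.

Lemma distxx (T : finType) (e : rel T) (econ : connected_graph e) x : gdist e x x = 0.
Proof. by apply/eqP; rewrite (dist0 econ). Qed.

Lemma dist_sym (T : finType) (e : rel T) (esym : symmetric e) (econ : connected_graph e) x y :
  gdist e x y = gdist e y x.
Proof.
apply/eqP; rewrite eqn_leq -!(gdist_ball econ); apply/andP; split; apply: ball_sym => //;
by rewrite (gdist_ball econ).
Qed.

Lemma dist_tri (T : finType) (e : rel T) (econ : connected_graph e) x y z :
  gdist e x z <= gdist e x y + gdist e y z.
Proof. by rewrite -(gdist_ball econ); apply: (@ball_trans _ _ _ y); rewrite (gdist_ball econ). Qed.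

Lemma dist1 (T : finType) (e : rel T) (eirr : irreflexive e) (econ : connected_graph e) x y :
  (gdist e x y == 1) = e x y.
Proof.
apply/idP/idP => [h|exy].
  have : y \in ball e x 1 by rewrite (gdist_ball econ) (eqP h).
  rewrite ball1 => /orP[/eqP yx|//].
  by move: h; rewrite yx (distxx econ).
rewrite eqn_leq -(gdist_ball econ) ball1 exy orbT /= lt0n (dist0 econ).
by apply/eqP => yx; rewrite yx eirr in exy.
Qed.

Lemma dist_step (T : finType) (e : rel T) (eirr : irreflexive e) (econ : connected_graph e) x y n :
  gdist e x y = n.+1 -> exists z, gdist e x z = n /\ e z y.
Proof.
move=> H.
have : y \in ball e x n.+1 by rewrite (gdist_ball econ) H.
have : y \notin ball e x n by rewrite (gdist_ball econ) H ltnn.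
rewrite ballS => /negbTE -> /= /existsP[z /andP[zn ezy]].
exists z; split => //; apply/eqP; rewrite eqn_leq -(gdist_ball econ) zn /=.
have := dist_tri econ x z y; rewrite H.
have -> : gdist e z y = 1 by apply/eqP; rewrite (dist1 eirr econ).
by rewrite addn1 ltnS.
Qed.

Lemma dist_mid (T : finType) (e : rel T) (eirr : irreflexive e) (econ : connected_graph e) x u a b :
  gdist e x u = a + b -> exists z, gdist e x z = a /\ gdist e z u = b.
Proof.
elim: b u => [|b IH] u h.
  by exists u; split; [rewrite h addn0 | apply/eqP; rewrite (dist0 econ)].
rewrite addnS in h; have [z' [hz' ez'u]] := dist_step eirr econ h.
have [z [hz hzz']] := IH _ hz'.
exists z; split => //; apply/eqP; rewrite eqn_leq; apply/andP; split.
  have := dist_tri econ z z' u; rewrite hzz'.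
  by rewrite (_ : gdist e z' u = 1) ?addn1 //; apply/eqP; rewrite (dist1 eirr econ).
by have := dist_tri econ x z u; rewrite h hz -addnS leq_add2l.
Qed.

Record hyp (T : finType) (e : rel T) (k lam mu : nat) : Prop := Hyp {
  esym : symmetric e; eirr : irreflexive e; econ : connected_graph e;
  hk : forall x, #|nbhd e x| = k;
  hl : forall x y, e x y -> #|nbhd e x :&: nbhd e y| = lam;
  hm : forall x y, gdist e x y = 2 -> #|nbhd e x :&: nbhd e y| = mu;
  hkm : k = mu.*2.+1; hmu : 1 < mu }.

Lemma inN (T : finType) (e : rel T) x y : (y \in nbhd e x) = e x y.
Proof. by rewrite inE. Qed.

Lemma sum_bool (T : finType) (P : pred T) : \sum_b (P b : nat) = #|P|.
Proof.
rewrite -sum1_card [RHS]big_mkcond /=; apply: eq_bigr => b _.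
by rewrite unfold_in; case: (P b).
Qed.

Lemma dist2 (T : finType) (e : rel T) k lam mu (H : hyp e k lam mu) z a b :
  e z a -> e a b -> (gdist e z b == 2) = (b != z) && ~~ e z b.
Proof.
move=> eza eab.
have := dist_tri (econ H) z a b.
rewrite (eqP (_ : gdist e z a == 1)) ?(dist1 (eirr H) (econ H)) //.
rewrite (eqP (_ : gdist e a b == 1)) ?(dist1 (eirr H) (econ H)) //.
rewrite -(dist0 (econ H)) -(dist1 (eirr H) (econ H)).
move: (gdist e z b) => n; case: n => [|[|[|n]]] //.
Qed.

Lemma count (T : finType) (e : rel T) k lam mu (H : hyp e k lam mu) z :
  k * (k - lam - 1) = mu * #|[set b | gdist e z b == 2]|.
Proof.
pose f a b := [&& e z a, e a b & gdist e z b == 2].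
have E1 : \sum_a \sum_b (f a b : nat) = k * (k - lam - 1).
  transitivity (\sum_a (e z a : nat) * (k - lam - 1)); last first.
    rewrite -big_distrl /= sum_bool; congr (_ * _).
    by rewrite -(hk H z); apply: eq_card => a; rewrite inE.
  apply: eq_bigr => a _; rewrite /f; case eza: (e z a) => /=; last by rewrite big1.
  rewrite mul1n sum_bool.
  have -> : #|[pred b | e a b && (gdist e z b == 2)]| = #|(nbhd e a :\: nbhd e z) :\ z|.
    apply: eq_card => b; rewrite !inE; case eab: (e a b); last by rewrite !andbF.
    by rewrite (dist2 H eza eab) andbT.
  have := cardsD1 z (nbhd e a :\: nbhd e z).
  have zin : z \in nbhd e a :\: nbhd e z by rewrite !inE (eirr H) (esym H) eza.
  have eaz : e a z by rewrite (esym H).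
  rewrite zin cardsD (hk H) (hl H eaz) => ->.
  by rewrite add1n subn1.
have E2 : \sum_a \sum_b (f a b : nat) = mu * #|[set b | gdist e z b == 2]|.
  rewrite exchange_big /=.
  transitivity (\sum_b (gdist e z b == 2 : nat) * mu); last first.
    rewrite -big_distrl /= sum_bool [RHS]mulnC; congr (_ * _).
    by apply: eq_card => a; rewrite inE.
  apply: eq_bigr => b _; rewrite /f.
  case d2: (gdist e z b == 2); last by rewrite big1 // => a _; rewrite !andbF.
  rewrite mul1n; under eq_bigr do rewrite andbT.
  rewrite sum_bool -(hm H (eqP d2)); apply: eq_card => a; rewrite !inE (esym H b).
  done.
by rewrite -E1 -E2.
Qed.

Lemma arith k lam mu s : k = mu.*2.+1 -> 0 < mu -> lam <= mu ->
  k * (k - lam - 1) = mu * s -> lam = 0 \/ lam = mu.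
Proof.
move=> hk mu0 lm h.
have h2 : mu * s + lam = mu * (4 * mu + 2 - 2 * lam).
  rewrite -h hk.
  have [t ht] : exists t, mu.*2 = t + lam by exists (mu.*2 - lam); lia.
  have -> : mu.*2.+1 - lam - 1 = t by lia.
  have -> : 4 * mu + 2 - 2 * lam = 2 * t + 2 by lia.
  rewrite -!muln2 in ht *.
  have e1 : (mu*2).+1 * t = t + 2 * (mu * t) by rewrite mulSn mulnAC mulnC.
  have e2 : mu * (2*t+2) = 2*(mu*t) + mu*2 by rewrite mulnDr mulnCA.
  rewrite e1 e2 ht; move: (mu * t) => P; lia.
have : mu %| mu * s + lam by rewrite h2 dvdn_mulr.
rewrite dvdn_addr ?dvdn_mulr // => /dvdnP[t ht].
case: t ht => [|[|t]] ht; first by left; rewrite ht mul0n.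
  by right; rewrite ht mul1n.
by rewrite ht !mulSn in lm; move: (t * mu) lm => P lm; lia.
Qed.

Lemma card_disj_sub (T : finType) (A B C : {set T}) :
  A :&: B = set0 -> A \subset C -> B \subset C -> #|A| + #|B| <= #|C|.
Proof.
move=> AB sA sB; have := cardsU A B; rewrite AB cards0 subn0 => <-.
by apply: subset_leq_card; rewrite subUset sA sB.
Qed.

Lemma disj_full (T : finType) (A B C : {set T}) :
  A :&: B = set0 -> A \subset C -> B \subset C -> #|A| + #|B| = #|C| -> A :|: B = C.
Proof.
move=> AB sA sB h; apply/eqP; rewrite eqEcard subUset sA sB /=.
by rewrite cardsU AB cards0 subn0 h.
Qed.

Lemma dist_e (T : finType) (e : rel T) k lam mu (H : hyp e k lam mu) a b :
  e a b -> gdist e a b = 1.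
Proof. by move=> h; apply/eqP; rewrite (dist1 (eirr H) (econ H)). Qed.

Lemma far2 (T : finType) (e : rel T) k lam mu (H : hyp e k lam mu) x u a :
  gdist e x u = 4 -> e x a -> e a u -> False.
Proof.
move=> d exa eau; have := dist_tri (econ H) x a u.
by rewrite d (dist_e H exa) (dist_e H eau).
Qed.

Lemma far3 (T : finType) (e : rel T) k lam mu (H : hyp e k lam mu) x u a b :
  gdist e x u = 4 -> e x a -> e a b -> e b u -> False.
Proof.
move=> d exa eab ebu; have t1 := dist_tri (econ H) x a u.
have t2 := dist_tri (econ H) a b u.
rewrite d (dist_e H exa) in t1; rewrite (dist_e H eab) (dist_e H ebu) in t2; lia.
Qed.

Lemma partA1 (T : finType) (e : rel T) k lam mu (H : hyp e k lam mu) x u z w :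
  gdist e x u = 4 -> gdist e x z = 2 -> e z w -> e u w ->
  lam <= mu /\ (lam = mu -> forall c, e z c -> ~~ e x c -> c != w -> e w c).
Proof.
move=> dxu dxz ezw euw.
have ewu : e w u by rewrite (esym H).
have nxw : e x w = false by apply: negbTE; apply/negP => exw; exact: (far2 H dxu exw ewu).
have cA : #|nbhd e z :&: nbhd e x| = mu.
  by rewrite (hm H) // (dist_sym (esym H) (econ H)).
have cX : #|w |: (nbhd e z :&: nbhd e x)| = mu.+1.
  by rewrite cardsU1 cA !inE ezw nxw.
have cY : #|nbhd e z :&: nbhd e w| = lam by rewrite (hl H).
have XY : (w |: (nbhd e z :&: nbhd e x)) :&: (nbhd e z :&: nbhd e w) = set0.
  apply/setP => v; rewrite !inE; apply/negP.
  move=> /andP[/orP[/eqP->|/andP[_ exv]] /andP[ezv ewv]].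
    by rewrite (eirr H) in ewv.
  by rewrite (esym H) in ewv; exact: (far3 H dxu exv ewv ewu).
have sX : w |: (nbhd e z :&: nbhd e x) \subset nbhd e z.
  by apply/subsetP => v; rewrite !inE => /orP[/eqP->|/andP[]//]; rewrite ezw.
have sY : nbhd e z :&: nbhd e w \subset nbhd e z by apply: subsetIl.
have hkm' := hkm H.
split; first by have := card_disj_sub XY sX sY; rewrite cX cY (hk H); lia.
move=> lm c ezc nxc ncw.
have full := disj_full XY sX sY (_ : _ = _).
have : c \in nbhd e z by rewrite inN.
rewrite -full ?cX ?cY ?(hk H); last by lia.
rewrite !inE => /orP[/orP[/eqP cw|/andP[_ exc]]|/andP[_ ewc]] //.
  by rewrite cw eqxx in ncw.
by rewrite exc in nxc.
Qed.

Lemma partA (T : finType) (e : rel T) k lam mu (H : hyp e k lam mu) x u z :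
  gdist e x u = 4 -> gdist e x z = 2 -> gdist e z u = 2 -> lam <= mu /\ lam <> mu.
Proof.
move=> dxu dxz dzu.
have dux : gdist e u x = 4 by rewrite (dist_sym (esym H) (econ H)).
have duz : gdist e u z = 2 by rewrite (dist_sym (esym H) (econ H)).
have cU : #|nbhd e z :&: nbhd e u| = mu by rewrite (hm H).
have cA : #|nbhd e z :&: nbhd e x| = mu.
  by rewrite (hm H) // (dist_sym (esym H) (econ H)).
have mu0 := hmu H; have hkm' := hkm H.
have /set0Pn [w] : nbhd e z :&: nbhd e u != set0 by rewrite -card_gt0 cU; lia.
rewrite !inE => /andP[ezw euw].
have [lm _] := partA1 H dxu dxz ezw euw.
split => // lmu.
have AU : (nbhd e z :&: nbhd e x) :&: (nbhd e z :&: nbhd e u) = set0.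
  apply/setP => v; rewrite !inE; apply/negP => /andP[/andP[_ exv] /andP[_ euv]].
  by rewrite (esym H) in euv; exact: (far2 H dxu exv euv).
have : ~~ (nbhd e z \subset (nbhd e z :&: nbhd e x) :|: (nbhd e z :&: nbhd e u)).
  apply/negP => /subset_leq_card; rewrite cardsU AU cards0 subn0 cA cU (hk H); lia.
case/subsetPn => c; rewrite inN => ezc; rewrite !inE ezc /= negb_or => /andP[nxc nuc].
have h1 : forall w, e z w -> e u w -> e w c.
  move=> w' ezw' euw'; have [_ h] := partA1 H dxu dxz ezw' euw'.
  apply: h => //; apply/eqP => cw; by rewrite cw euw' in nuc.
have h2 : forall y, e z y -> e x y -> e y c.
  move=> y ezy exy; have [_ h] := partA1 H dux duz ezy exy.
  apply: h => //; apply/eqP => cy; by rewrite cy exy in nxc.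
have : (nbhd e z :&: nbhd e x) :|: (nbhd e z :&: nbhd e u) \subset nbhd e c :&: nbhd e z.
  apply/subsetP => v; rewrite !inE => /orP[/andP[ezv exv]|/andP[ezv euv]];
    rewrite ezv andbT (esym H); [exact: h2 | exact: h1].
have ecz : e c z by rewrite (esym H).
move/subset_leq_card; rewrite cardsU AU cards0 subn0 cA cU (hl H ecz); lia.
Qed.

Lemma partB (T : finType) (e : rel T) k lam mu (H : hyp e k lam mu) (l0 : lam = 0) x z :
  gdist e x z = 3 -> mu < #|nbhd e z :&: [set v | gdist e x v == 2]|.
Proof.
move=> dxz; rewrite ltnNge; apply/negP => cC.
have ec := econ H; have es := esym H; have ei := eirr H; have mu0 := hmu H.
have [w [dxw ewz]] := dist_step ei ec dxz.
have [y [dxy eyw]] := dist_step ei ec dxw.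
have exy : e x y by rewrite -(dist1 ei ec) dxy.
have key : forall y', e x y' -> e y' w ->
    nbhd e z :&: [set v | gdist e x v == 2] \subset nbhd e y' /\
    #|nbhd e z :&: [set v | gdist e x v == 2]| = mu.
  move=> y' exy' ey'w.
  have dy'z : gdist e y' z = 2.
    have t1 := dist_tri ec y' w z; have t2 := dist_tri ec x y' z.
    rewrite dxz (dist_e H exy') in t2; rewrite (dist_e H ey'w) (dist_e H ewz) in t1; lia.
  have sub : nbhd e y' :&: nbhd e z \subset nbhd e z :&: [set v | gdist e x v == 2].
    apply/subsetP => v; rewrite !inE => /andP[ey'v ezv]; rewrite ezv /=; apply/eqP.
    have evz : e v z by rewrite es.
    have t1 := dist_tri ec x y' v; have t2 := dist_tri ec x v z.
    rewrite dxz (dist_e H evz) in t2; rewrite (dist_e H exy') (dist_e H ey'v) in t1; lia.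
  have cm := hm H dy'z.
  have eqC : nbhd e y' :&: nbhd e z = nbhd e z :&: [set v | gdist e x v == 2].
    by apply/eqP; rewrite eqEcard sub cm.
  by rewrite -eqC subsetIl cm.
have [_ cCm] := key y exy eyw.
have wC : w \in nbhd e z :&: [set v | gdist e x v == 2] by rewrite !inE es ewz dxw eqxx.
have : 0 < #|(nbhd e z :&: [set v | gdist e x v == 2]) :\ w|.
  by have := cardsD1 w (nbhd e z :&: [set v | gdist e x v == 2]); rewrite wC cCm add1n; lia.
rewrite card_gt0 => /set0Pn[w']; rewrite !inE => /andP[w'w /andP[ezw' dxw']].
have ezw : e z w by rewrite es.
have new : e w w' = false.
  apply: negbTE; apply/negP => eww'.
  have := hl H ezw; rewrite l0 => /eqP; rewrite cards_eq0 => /eqP E.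
  have : w' \in nbhd e z :&: nbhd e w by rewrite !inE ezw' eww'.
  by rewrite E inE.
have dww' : gdist e w w' = 2.
  have t := dist_tri ec w z w'.
  rewrite (dist_e H ewz) (dist_e H ezw') in t.
  have n0 : (gdist e w w' == 0) = false by rewrite (dist0 ec); apply: negbTE.
  have n1 : (gdist e w w' == 1) = false by rewrite (dist1 ei ec) new.
  move: t n0 n1; case: (gdist e w w') => [|[|[|n]]] //.
have sub : z |: (nbhd e w :&: nbhd e x) \subset nbhd e w :&: nbhd e w'.
  apply/subsetP => v; rewrite !inE => /orP[/eqP->|/andP[ewv exv]].
    by rewrite ewz /= es.
  rewrite ewv /=.
  have evw : e v w by rewrite es.
  have [s _] := key v exv evw.
  have : w' \in nbhd e z :&: [set v | gdist e x v == 2] by rewrite !inE ezw' dxw'.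
  by move/(subsetP s); rewrite inE es.
have nxz : e x z = false by rewrite -(dist1 ei ec) dxz.
have dwx : gdist e w x = 2 by rewrite (dist_sym es ec).
have := subset_leq_card sub; rewrite cardsU1 (hm H dww') (hm H dwx) !inE nxz andbF /=.
lia.
Qed.

Lemma diam_wit (T : finType) (e : rel T) d :
  diameter e = d -> 0 < d -> exists x u, gdist e x u = d.
Proof.
move=> D d0.
case: (boolP [exists p : T * T, gdist e p.1 p.2 == d]) => [/existsP[[x u] /eqP h]|/existsPn h].
  by exists x, u.
have : diameter e <= d.-1.
  apply/bigmax_leqP => p _; have := leq_bigmax (F := fun p : T * T => gdist e p.1 p.2) p.
  rewrite -/(diameter e) D; have := h p; move: (gdist e p.1 p.2) => n; lia.
by rewrite D; lia.
Qed.

Unset Implicit Arguments.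

Theorem lemma3p3 (T : finType) (e : rel T) (v k lam mu d : nat) :
  simple_graph e -> connected_graph e -> amply_regular e v k lam mu ->
  diameter e = d -> 4 <= d ->
  odd k -> 5 <= k -> mu.*2 = k - 1 ->
  lam = 0 /\ d <= 5.
Proof.
move=> [es ei] ec [_ hk' hl' hm'] D d4 _ k5 hmk.
have H : hyp e k lam mu.
  by constructor => //; lia.
have d0 : 0 < d by lia.
have [x0 [u0 du0]] := diam_wit D d0.
have e4 : gdist e x0 u0 = 4 + (d - 4) by rewrite du0; lia.
have [u [dxu _]] := dist_mid ei ec e4.
have e22 : gdist e x0 u = 2 + 2 by rewrite dxu.
have [z [dxz dzu]] := dist_mid ei ec e22.
have [lm lnm] := partA H dxu dxz dzu.
have l0 : lam = 0.
  have mu0 : 0 < mu by have := hmu H; lia.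
  by case: (arith (hkm H) mu0 lm (count H z)) => // /lnm.
split => //.
rewrite leqNgt; apply/negP => d6.
have e6 : gdist e x0 u0 = 6 + (d - 6) by rewrite du0; lia.
have [u' [dxu' _]] := dist_mid ei ec e6.
have e33 : gdist e x0 u' = 3 + 3 by rewrite dxu'.
have [z' [dxz' dzu']] := dist_mid ei ec e33.
have duz' : gdist e u' z' = 3 by rewrite (dist_sym es ec).
have c1 := partB H l0 dxz'.
have c2 := partB H l0 duz'.
have disj : (nbhd e z' :&: [set v | gdist e x0 v == 2]) :&:
            (nbhd e z' :&: [set v | gdist e u' v == 2]) = set0.
  apply/setP => t; rewrite !inE; apply/negP => /andP[/andP[_ /eqP h1] /andP[_ /eqP h2]].
  have := dist_tri ec x0 t u'; rewrite dxu' h1 (dist_sym es ec t) h2; done.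
have := card_disj_sub disj (subsetIl _ _) (subsetIl _ _).
rewrite (hk H) (hkm H); lia.
Qed.
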